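(* Let $U\in C^{3}(\mathbb{R}^{d})$ be a Morse function, $\boldsymbol{\ell}$ a $C^{1}$ vector field with $\nabla U\cdot\boldsymbol{\ell}\equiv0$, and $\boldsymbol{\sigma}$ a critical point of $U$ such that $\mathbb{H}=\nabla^{2}U(\boldsymbol{\sigma})$ has eigenvalues $-\lambda_{1},\lambda_{2},\dots,\lambda_{d}$ with $\lambda_{1},\dots,\lambda_{d}>0$ and corresponding orthonormal eigenvectors $\boldsymbol{e}_{1},\dots,\boldsymbol{e}_{d}$. Let $\mathbb{L}=D\boldsymbol{\ell}(\boldsymbol{\sigma})$, let $-\mu$ be the unique negative eigenvalue of $\mathbb{H}-\mathbb{L}^{\dagger}$, and let $\boldsymbol{v}$ be a unit eigenvector of $\mathbb{H}-\mathbb{L}^{\dagger}$ for $-\mu$. Then \[ \boldsymbol{v}\cdot\mathbb{H}^{-1}\boldsymbol{v}\,=\,-\frac{(\boldsymbol{v}\cdot\boldsymbol{e}_{1})^{2}}{\lambda_{1}}+\sum_{k=2}^{d}\frac{(\boldsymbol{v}\cdot\boldsymbol{e}_{k})^{2}}{\lambda_{k}}\,=\,-\frac{1}{\mu}\,<\,0. \]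
   Context: $\mathbb{L}^{\dagger}$ is the transpose of $\mathbb{L}$. Under these hypotheses $\mathbb{H}-\mathbb{L}^{\dagger}$ is similar to $\mathbb{H}+\mathbb{L}$, which is invertible with exactly one negative eigenvalue, so $\mu>0$ is well defined. *)

(* Defs.v *)
From HB Require Import structures.
From mathcomp Require Import all_boot all_order all_algebra.
From mathcomp Require Import all_classical all_reals all_analysis.
Set Implicit Arguments. Unset Strict Implicit. Unset Printing Implicit Defensive.
Import Order.TTheory GRing.Theory Num.Theory.
Import numFieldNormedType.Exports.
Local Open Scope ring_scope.

Definition ev {R : realType} {d : nat} (i : 'I_d) : 'rV[R]_d := delta_mx 0 i.

Definition dotv {R : realType} {d : nat} (u v : 'rV[R]_d) : R :=
  \sum_(i < d) u 0 i * v 0 i.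

Definition partial {R : realType} {d : nat} (i : 'I_d) (f : 'rV[R]_d -> R)
  : 'rV[R]_d -> R := fun x => 'D_(ev i) f x.

(* iterated partial derivative: [:: i; j] gives d_i d_j f *)
Definition iter_partial {R : realType} {d : nat} (s : seq 'I_d)
  (f : 'rV[R]_d -> R) : 'rV[R]_d -> R := foldr (fun i g => partial i g) f s.

(* f is of class C^k: all partial derivatives of order < k exist everywhere
   (so the ones of order <= k are defined), and all partial derivatives of
   order <= k are continuous. *)
Definition Ck {R : realType} {d : nat} (k : nat) (f : 'rV[R]_d -> R) : Prop :=
  forall s : seq 'I_d, (size s <= k)%N ->
    continuous (iter_partial s f) /\
    ((size s < k)%N -> forall (i : 'I_d) (x : 'rV[R]_d),
        derivable (iter_partial s f) x (ev i)).

Definition Ck_field {R : realType} {d : nat} (k : nat)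
  (l : 'rV[R]_d -> 'rV[R]_d) : Prop :=
  forall i : 'I_d, Ck k (fun x => l x 0 i).

Definition gradient {R : realType} {d : nat} (f : 'rV[R]_d -> R) (x : 'rV[R]_d)
  : 'rV[R]_d := \row_i partial i f x.

Definition hessian {R : realType} {d : nat} (f : 'rV[R]_d -> R) (x : 'rV[R]_d)
  : 'M[R]_d := \matrix_(i, j) partial i (partial j f) x.

Definition jacobian_mx {R : realType} {d : nat} (l : 'rV[R]_d -> 'rV[R]_d)
  (x : 'rV[R]_d) : 'M[R]_d := \matrix_(i, j) partial j (fun y => l y 0 i) x.

Definition morse {R : realType} {d : nat} (f : 'rV[R]_d -> R) : Prop :=
  forall x, gradient f x = 0 -> hessian f x \in unitmx.

(* Main.v *)
Require Import Defs.
From HB Require Import structures.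
From mathcomp Require Import all_boot all_order all_algebra.
From mathcomp Require Import all_classical all_reals all_analysis.
Import Order.TTheory GRing.Theory Num.Theory.
Import numFieldNormedType.Exports.
Local Open Scope classical_set_scope.
Local Open Scope ring_scope.

Section An.
Variable R : realType.

Lemma cvg_sumR (T : Type) (F : set_system T) {FF : Filter F} m
  (f : 'I_m -> T -> R) (a : 'I_m -> R) :
  (forall i, f i @ F --> a i) -> (fun h => \sum_i f i h) @ F --> \sum_i a i.
Proof.
move=> H; rewrite -fct_sumE.
elim/big_ind2: _ => //.
- exact: cvg_cst.
- by move=> g1 a1 g2 a2 h1 h2; apply: cvgD.
Qed.

Lemma quot_cvg d (f : 'rV[R]_d -> R) (a v : 'rV[R]_d) :
  derivable f a v -> f a = 0 ->
  (fun h : R => h^-1 * f (h *: v + a)) @ 0^' --> 'D_v f a.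
Proof.
move=> df fa0.
have hc := df; rewrite /derivable in hc.
have Dv : 'D_v f a = lim ((fun h => h^-1 *: ((f \o shift a) (h *: v) - f a)) @ 0^') by [].
rewrite Dv.
have -> : (fun h : R => h^-1 * f (h *: v + a)) =
  (fun h => h^-1 *: ((f \o shift a) (h *: v) - f a)) by
  apply/funext => h /=; rewrite fa0 subr0.
exact: hc.
Qed.

Lemma cont_cvg d (c : 'rV[R]_d -> R) (a v : 'rV[R]_d) :
  continuous c -> (fun h : R => c (h *: v + a)) @ 0^' --> c a.
Proof.
move=> cc.
have : {for 0, continuous (fun h : R => c (h *: v + a))}.
  have -> : (fun h : R => c (h *: v + a)) = c \o (fun h : R => h *: v + a) by [].
  apply: continuous_comp; last exact: cc.
  apply: cvgD; last exact: cvg_cst.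
  apply: cvgZr_tmp. exact: cvg_id.
by move=> /continuous_withinNx; rewrite scale0r add0r.
Qed.
End An.

Section An2.
Variable R : realType.
Variable n : nat.
Variables (U : 'rV[R]_n -> R) (l : 'rV[R]_n -> 'rV[R]_n).
Hypothesis CU : Ck 3 U.
Hypothesis Cl : Ck_field 1 l.
Hypothesis orth : forall x, dotv (gradient U x) (l x) = 0.

Lemma dG i x j : derivable (partial i U) x (ev j).
Proof. by have [_ /(_ isT)] := CU [:: i] isT. Qed.
Lemma cGG i j : continuous (partial j (partial i U)).
Proof. by have [] := CU [:: j; i] isT. Qed.
Lemma dl i x j : derivable (fun y => l y 0 i) x (ev j).
Proof. by have [_ /(_ isT)] := Cl i [::] isT. Qed.
Lemma cdl i j : continuous (partial j (fun y => l y 0 i)).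
Proof. by have [] := Cl i [:: j] isT. Qed.

Lemma stepA x j : \sum_i (partial j (partial i U) x * l x 0 i
   + partial i U x * partial j (fun y => l y 0 i) x) = 0.
Proof.
have g0 : (\sum_i (partial i U * (fun y => l y 0 i))) = (fun _ => 0 : R).
  apply/funext => y; transitivity (dotv (gradient U y) (l y)); last exact: orth y.
  rewrite fct_sumE /dotv; apply: eq_bigr => i _; by rewrite /gradient mxE.
have : partial j (\sum_i (partial i U * (fun y => l y 0 i))) x = 0.
  by rewrite g0 /partial; apply: (derive_cst (0:R)).
rewrite /partial derive_sum; last first.
  by move=> i; apply: derivableM; [apply: dG | apply: dl].
move=> h; apply: (etrans _ h); apply: eq_bigr => i _.
rewrite deriveM; [|apply: dG|apply: dl].
by rewrite /= /partial addrC; congr (_ + _); rewrite mulrC.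
Qed.

Variable sigma : 'rV[R]_n.
Hypothesis gs : gradient U sigma = 0.
Hypothesis Hinv : hessian U sigma \in unitmx.

Lemma Gs i : partial i U sigma = 0.
Proof. by have := congr1 (fun M : 'rV_n => M 0 i) gs; rewrite /= !mxE. Qed.

Lemma ls : l sigma = 0.
Proof.
have : hessian U sigma *m (l sigma)^T = 0.
  apply/matrixP => j k; rewrite !mxE; apply: (etrans _ (stepA sigma j)); apply: eq_bigr => i _.
  by rewrite !mxE Gs mul0r addr0 (ord1 k).
by move=> /(congr1 (mulmx (invmx (hessian U sigma)))); rewrite mulmxA mulVmx // mul1mx mulmx0 => /(congr1 trmx); rewrite trmxK trmx0.
Qed.

Lemma stepB j k : \sum_i (partial j (partial i U) sigma * partial k (fun y => l y 0 i) sigma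
   + partial k (partial i U) sigma * partial j (fun y => l y 0 i) sigma) = 0.
Proof.
set F := fun h : R => \sum_i (partial j (partial i U) (h *: ev k + sigma)
     * (h^-1 * l (h *: ev k + sigma) 0 i)
   + (h^-1 * partial i U (h *: ev k + sigma)) * partial j (fun y => l y 0 i) (h *: ev k + sigma)).
have F0 : F = fun _ => 0.
  apply/funext => h; rewrite /F -[RHS](mulr0 h^-1); rewrite -[X in _ * X](stepA (h *: ev k + sigma) j) mulr_sumr.
  by apply: eq_bigr => i _; rewrite mulrDr; congr (_ + _); [rewrite mulrCA | rewrite mulrA].
have cF : F @ 0^' --> \sum_i (partial j (partial i U) sigma * partial k (fun y => l y 0 i) sigma
   + partial k (partial i U) sigma * partial j (fun y => l y 0 i) sigma).
  apply: cvg_sumR => i; apply: cvgD; apply: cvgM.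
  - exact: cont_cvg (cGG i j).
  - by apply: quot_cvg; [apply: dl | rewrite ls mxE].
  - by apply: quot_cvg; [apply: dG | apply: Gs].
  - exact: cont_cvg (cdl i j).
move: cF; rewrite F0 => cF.
by rewrite -(cvg_lim (@norm_hausdorff _ R^o) cF) lim_cst.
Qed.
End An2.

From mathcomp Require Import ring lra.

Lemma dotvE {R : realType} {d : nat} (u w : 'rV[R]_d) : dotv u w = (u *m w^T) 0 0.
Proof. by rewrite /dotv !mxE; apply: eq_bigr => i _; rewrite mxE. Qed.

Lemma skew {R : realType} {n : nat} (U : 'rV[R]_n -> R) (l : 'rV[R]_n -> 'rV[R]_n) sigma :
  Ck 3 U -> Ck_field 1 l -> (forall x, dotv (gradient U x) (l x) = 0) ->
  gradient U sigma = 0 -> hessian U sigma \in unitmx ->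
  hessian U sigma *m jacobian_mx l sigma + (hessian U sigma *m jacobian_mx l sigma)^T = 0.
Proof.
move=> CU Cl orth gs Hu; apply/matrixP => j k; rewrite !mxE; apply: (etrans _ (@stepB R n U l CU Cl orth sigma gs Hu j k)).
rewrite -big_split; apply: eq_bigr => i _ /=; rewrite !mxE.
by [].
Qed.

Theorem lemma8p1 (R : realType) (n : nat)
  (U : 'rV[R]_n.+1 -> R) (l : 'rV[R]_n.+1 -> 'rV[R]_n.+1) (sigma : 'rV[R]_n.+1)
  (lam : 'I_n.+1 -> R) (e : 'I_n.+1 -> 'rV[R]_n.+1)
  (mu : R) (v : 'rV[R]_n.+1) :
  Ck 3 U -> morse U ->
  Ck_field 1 l ->
  (forall x, dotv (gradient U x) (l x) = 0) ->
  gradient U sigma = 0 ->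
  (forall k, 0 < lam k) ->
  (forall j k, dotv (e j) (e k) = (j == k)%:R) ->
  (hessian U sigma *m (e ord0)^T = (- lam ord0) *: (e ord0)^T) ->
  (forall k, k != ord0 -> hessian U sigma *m (e k)^T = lam k *: (e k)^T) ->
  let H := hessian U sigma in
  let L := jacobian_mx l sigma in
  0 < mu ->
  (H - L^T) *m v^T = (- mu) *: v^T ->
  (forall nu, nu < 0 -> eigenvalue (H - L^T) nu -> nu = - mu) ->
  dotv v v = 1 ->
  dotv v ((invmx H *m v^T)^T)
    = - (dotv v (e ord0)) ^+ 2 / lam ord0
      + \sum_(k : 'I_n) (dotv v (e (lift ord0 k))) ^+ 2 / lam (lift ord0 k)
  /\ - (dotv v (e ord0)) ^+ 2 / lam ord0
      + \sum_(k : 'I_n) (dotv v (e (lift ord0 k))) ^+ 2 / lam (lift ord0 k)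
     = - 1 / mu
  /\ - 1 / mu < 0.
Proof.
move=> CU MU Cl orth gs lampos eorth He0 Hek H L mupos Hv _ vv.
have Hu : H \in unitmx by exact: MU.
have sk := @skew R n.+1 U l sigma CU Cl orth gs Hu; rewrite -/H -/L in sk.
pose E : 'M[R]_n.+1 := \matrix_(k, i) e k 0 i.
pose dv : 'rV[R]_n.+1 := \row_k (if k == ord0 then - lam ord0 else lam k).
pose di : 'rV[R]_n.+1 := \row_k (dv 0 k)^-1.
have dne0 : forall k, dv 0 k != 0.
  move=> k; rewrite mxE; case: ifP => _; last exact: lt0r_neq0.
  by rewrite oppr_eq0 lt0r_neq0.
have EE : E *m E^T = 1%:M.
  apply/matrixP => j k; rewrite !mxE -eorth /dotv; apply: eq_bigr => i _.
  by rewrite !mxE.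
have EE' : E^T *m E = 1%:M by apply: mulmx1C.
have HE : H *m E^T = E^T *m diag_mx dv.
  apply/matrixP => i k; rewrite mul_mx_diag !mxE.
  have Hk : H *m (e k)^T = dv 0 k *: (e k)^T.
    rewrite mxE; case: ifP => [/eqP ->|/negbT]; [exact: He0 | exact: Hek].
  have := congr1 (fun M : 'cV_n.+1 => M i 0) Hk; rewrite /= !mxE mulrC => <-.
  by apply: eq_bigr => m _; rewrite !mxE.
have Hdec : H = E^T *m diag_mx dv *m E.
  by rewrite -HE -mulmxA EE' mulmx1.
have Hsym : H^T = H.
  by rewrite Hdec !trmx_mul trmxK tr_diag_mx mulmxA.
have DD : diag_mx dv *m diag_mx di = 1%:M.
  apply/matrixP => i j; rewrite mul_diag_mx !mxE.
  case: (i == j); last by rewrite !mulr0n mulr0.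
  by rewrite !mulr1n mulfV //; have := dne0 i; rewrite mxE.
have Hi : invmx H = E^T *m diag_mx di *m E.
  have HX : H *m (E^T *m diag_mx di *m E) = 1%:M.
    rewrite Hdec -!mulmxA (mulmxA E) EE mul1mx (mulmxA (diag_mx dv)) DD mul1mx.
    exact: EE'.
  by rewrite -[RHS]mul1mx -(mulVmx Hu) -[(invmx H *m H) *m _]mulmxA HX mulmx1.
have q1 : dotv v ((invmx H *m v^T)^T) = \sum_k dotv v (e k) * (di 0 k * dotv v (e k)).
  rewrite dotvE trmxK Hi !mulmxA -(mulmxA _ _ E) -mulmxA mxE.
  apply: eq_bigr => k _; rewrite mul_diag_mx !mxE !dotvE !mxE.
  have -> : \sum_j (\matrix_(i, j0) (di 0 i * E i j0)) k j * v^T j 0 = di 0 k * \sum_j E k j * v^T j 0.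
    by rewrite mulr_sumr; apply: eq_bigr => j _; rewrite mxE mulrA.
  rewrite mxE.
  congr (_ * (_ * _)).
  - by apply: eq_bigr => i _; rewrite !mxE.
  - by rewrite mxE.
  - by apply: eq_bigr => i _; rewrite !mxE mulrC.
have q2 : dotv v ((invmx H *m v^T)^T) = - (dotv v (e ord0)) ^+ 2 / lam ord0
      + \sum_(k : 'I_n) (dotv v (e (lift ord0 k))) ^+ 2 / lam (lift ord0 k).
  rewrite q1 big_ord_recl !mxE eqxx; congr (_ + _).
    by rewrite invrN; ring.
  apply: eq_bigr => k _; rewrite !mxE eq_sym (negbTE (neq_lift ord0 k)).
  by rewrite mulrC -mulrA mulrC expr2.
rewrite -q2.
have e1 : H *m L + L^T *m H = 0 by move: sk; rewrite trmx_mul Hsym.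
have Hsk : L *m invmx H = - (invmx H *m L^T).
  have := congr1 (fun M => invmx H *m M *m invmx H) e1.
  rewrite /= mulmxDr mulmxDl mulmx0 mul0mx !mulmxA mulVmx // mul1mx.
  rewrite -(mulmxA _ H) mulmxV // mulmx1 => /eqP; rewrite addr_eq0 => /eqP.
  done.
have s0 : (v *m invmx H *m L^T *m v^T) 0 0 = 0.
  have : (v *m invmx H *m L^T *m v^T) 0 0 = - (v *m invmx H *m L^T *m v^T) 0 0.
    have tE : forall M : 'M[R]_1, M 0 0 = M^T 0 0 by move=> M; rewrite mxE.
    rewrite [LHS]tE.
    rewrite !trmx_mul !trmxK trmx_inv Hsym -!mulmxA (mulmxA L) Hsk.
    by rewrite mulNmx mulmxN mxE !mulmxA.
  lra.
have key : (v *m v^T) 0 0 - (v *m invmx H *m L^T *m v^T) 0 0 = - mu * (v *m (invmx H *m v^T)) 0 0.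
  have := congr1 (fun M => (v *m (invmx H *m M)) 0 0) Hv.
  have subE : forall (M N : 'M[R]_1), (M - N) 0 0 = M 0 0 - N 0 0 by move=> M N; rewrite !mxE.
  have scE : forall a (M : 'M[R]_1), (a *: M) 0 0 = a * M 0 0 by move=> a M; rewrite !mxE.
  rewrite /= mulmxBl !mulmxBr !mulmxA -[v *m invmx H *m H]mulmxA mulVmx // mulmx1.
  by rewrite -scalemxAr subE scE.
have qE : dotv v (invmx H *m v^T)^T = (v *m (invmx H *m v^T)) 0 0 by rewrite dotvE trmxK.
rewrite -dotvE vv s0 subr0 in key.
rewrite qE; split; first by []. split.
  have mu0 : mu != 0 by exact: lt0r_neq0.
  apply: (@mulfI _ (- mu)); first by rewrite oppr_eq0.
  by rewrite -key; field.
by rewrite mulN1r oppr_lt0 invr_gt0.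
Qed.
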